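(* Let $R$ be a (von Neumann) regular $K$-algebra, $J$ an ideal of $R$, and $\pi : R \to R/J$ the quotient map. If $A$ is a finite dimensional subalgebra of $R/J$, then $R$ has a finite dimensional subalgebra $T$ such that $\pi$ restricts to an algebra isomorphism of $T$ onto $A$. In particular, if $R/J$ is finite dimensional, there is a subalgebra $T$ of $R$ with $R = T \oplus J$ as $K$-vector spaces.
   Context: $K$ is a field. All algebras are associative but not necessarily unital $K$-algebras; ideals are two-sided ring ideals that are also $K$-subspaces. A ring $R$ is (von Neumann) regular if for every $x\in R$ there is $y \in R$ with $xyx = x$. *)

(* Defs.v *)
(* Non-unital associative K-algebras are modelled as a
   K-vector space (lmodType K) equipped with an explicit bilinear associative
   multiplication, since MathComp's ring structures are unital. *)
From HB Require Import structures.
From mathcomp Require Import all_boot all_algebra.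
Set Implicit Arguments. Unset Strict Implicit. Unset Printing Implicit Defensive.
Import GRing.Theory.
Local Open Scope ring_scope.

Definition is_algebra_mul (K : fieldType) (V : lmodType K) (mul : V -> V -> V) : Prop :=
  [/\ (forall x y z, mul x (mul y z) = mul (mul x y) z),
      (forall x y z, mul (x + y) z = mul x z + mul y z),
      (forall x y z, mul x (y + z) = mul x y + mul x z),
      (forall (a : K) x y, mul (a *: x) y = a *: mul x y)
    & (forall (a : K) x y, mul x (a *: y) = a *: mul x y)].

Definition is_subspace (K : fieldType) (V : lmodType K) (S : V -> Prop) : Prop :=
  [/\ S 0, (forall x y, S x -> S y -> S (x + y)) & (forall (a : K) x, S x -> S (a *: x))].

Definition fin_dim (K : fieldType) (V : lmodType K) (S : V -> Prop) : Prop :=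
  exists (n : nat) (v : 'I_n -> V), (forall i, S (v i)) /\
    (forall x, S x -> exists c : 'I_n -> K, x = \sum_(i < n) c i *: v i).

Definition is_subalgebra (K : fieldType) (V : lmodType K) (mul : V -> V -> V)
  (S : V -> Prop) : Prop :=
  is_subspace S /\ (forall x y, S x -> S y -> S (mul x y)).

Definition is_ideal (K : fieldType) (V : lmodType K) (mul : V -> V -> V)
  (J : V -> Prop) : Prop :=
  is_subspace J /\ (forall r x, J x -> J (mul r x) /\ J (mul x r)).

Definition vn_regular (K : fieldType) (V : lmodType K) (mul : V -> V -> V) : Prop :=
  forall x, exists y, mul (mul x y) x = x.

(* pi : R -> Q is (up to isomorphism) the quotient map R -> R/J:
   a surjective K-linear multiplicative map whose kernel is exactly J,
   where mulQ is the multiplication of Q = R/J. *)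
Definition is_quotient_map (K : fieldType) (R : lmodType K) (mulR : R -> R -> R)
  (J : R -> Prop) (Q : lmodType K) (mulQ : Q -> Q -> Q) (pi : R -> Q) : Prop :=
  [/\ (forall (a : K) x y, pi (a *: x + y) = a *: pi x + pi y),
      (forall x y, pi (mulR x y) = mulQ (pi x) (pi y)),
      (forall q, exists x, pi x = q)
    & (forall x, pi x = 0 <-> J x)].

(* Main.v *)
Require Import Defs.
From HB Require Import structures.
From mathcomp Require Import all_boot all_algebra.
From Stdlib Require Import Classical.
Import GRing.Theory.
Local Open Scope ring_scope.
Set Implicit Arguments. Unset Strict Implicit.

Lemma basis_exists (K : fieldType) (V : lmodType K) (A : V -> Prop) n (v : 'I_n -> V) :
  (forall i, A (v i)) -> (forall x, A x -> exists c : 'I_n -> K, x = \sum_i c i *: v i) ->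
  exists m (b : 'I_m -> V), [/\ (forall i, A (b i)),
     (forall x, A x -> exists c : 'I_m -> K, x = \sum_i c i *: b i) &
     (forall c : 'I_m -> K, \sum_i c i *: b i = 0 -> forall i, c i = 0)].
Proof.
elim: n v => [|m IH] v Av Sp.
  by exists 0%N, v; split => // c _ [].
case: (classic (forall c : 'I_m.+1 -> K, \sum_i c i *: v i = 0 -> forall i, c i = 0)) => [ind|nind].
  by exists m.+1, v.
have [c hc] := not_all_ex_not _ _ nind.
have [c0 hc2] := imply_to_and _ _ hc.
have [i ci] := not_all_ex_not _ _ hc2.
apply: (IH (fun k => v (lift i k))); first by move=> k; exact: Av.
move=> x /Sp [d ->].

rewrite (bigD1_ord i) // in c0.
have vi : v i = - ((c i)^-1 *: \sum_(k < m) c (lift i k) *: v (lift i k)).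
  apply/eqP; rewrite -subr_eq0 opprK -[v i](scale1r) -(@mulVf _ (c i)); last by apply/eqP.
  by rewrite -scalerA -scalerDr c0 scaler0.
exists (fun k => d (lift i k) - d i / c i * c (lift i k)).
rewrite (bigD1_ord i) //= vi.
apply/esym.
under eq_bigr do rewrite scalerBl -scalerA.
by rewrite sumrB -scaler_sumr scalerN scalerA addrC.
Qed.

Section MulLemmas.
Lemma mul0l (K : fieldType) (V : lmodType K) (m : V -> V -> V) :
  is_algebra_mul m -> forall x, m 0 x = 0.
Proof.
case=> _ Dl _ _ _ x; have h : m 0 x + m 0 x = m 0 x + 0 by rewrite -Dl !addr0.
exact: addrI h.
Qed.
Lemma mul0r (K : fieldType) (V : lmodType K) (m : V -> V -> V) :
  is_algebra_mul m -> forall x, m x 0 = 0.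
Proof.
case=> _ _ Dr _ _ x; have h : m x 0 + m x 0 = m x 0 + 0 by rewrite -Dr !addr0.
exact: addrI h.
Qed.
Lemma mulNl (K : fieldType) (V : lmodType K) (m : V -> V -> V) :
  is_algebra_mul m -> forall x y, m (- x) y = - m x y.
Proof.
move=> H x y; apply/eqP; rewrite -subr_eq0 opprK; case: (H) => _ Dl _ _ _.
by rewrite -Dl addNr (mul0l H).
Qed.
Lemma mulNr (K : fieldType) (V : lmodType K) (m : V -> V -> V) :
  is_algebra_mul m -> forall x y, m x (- y) = - m x y.
Proof.
move=> H x y; apply/eqP; rewrite -subr_eq0 opprK; case: (H) => _ _ Dr _ _.
by rewrite -Dr addNr (mul0r H).
Qed.
Lemma mulBl (K : fieldType) (V : lmodType K) (m : V -> V -> V) :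
  is_algebra_mul m -> forall x y z, m (x - y) z = m x z - m y z.
Proof. by move=> H x y z; case: (H) => _ Dl _ _ _; rewrite Dl (mulNl H). Qed.
Lemma mulBr (K : fieldType) (V : lmodType K) (m : V -> V -> V) :
  is_algebra_mul m -> forall x y z, m x (y - z) = m x y - m x z.
Proof. by move=> H x y z; case: (H) => _ _ Dr _ _; rewrite Dr (mulNr H). Qed.
Lemma mul_suml (K : fieldType) (V : lmodType K) (m : V -> V -> V) :
  is_algebra_mul m -> forall z (I : Type) (r : seq I) (P : pred I) (F : I -> V),
  m (\sum_(i <- r | P i) F i) z = \sum_(i <- r | P i) m (F i) z.
Proof.
move=> H z I r P F; case: (H) => _ Dl _ _ _.
exact: (big_morph (fun x => m x z) (fun a b => Dl a b z) (mul0l H z)).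
Qed.
Lemma mul_sumr (K : fieldType) (V : lmodType K) (m : V -> V -> V) :
  is_algebra_mul m -> forall z (I : Type) (r : seq I) (P : pred I) (F : I -> V),
  m z (\sum_(i <- r | P i) F i) = \sum_(i <- r | P i) m z (F i).
Proof.
move=> H z I r P F; case: (H) => _ _ Dr _ _.
exact: (big_morph (fun x => m z x) (fun a b => Dr z a b) (mul0r H z)).
Qed.
End MulLemmas.

Lemma local_unit (K : fieldType) (V : lmodType K) (m : V -> V -> V) :
  is_algebra_mul m -> vn_regular m -> forall s : seq V,
  exists u, [/\ m u u = u, (forall g, g \in s -> m u g = g) &
    (forall P : V -> Prop, P 0 -> (forall x y, P x -> P y -> P (x + y)) ->
       (forall x z, P x -> P (m x z)) -> (forall g, g \in s -> P g) -> P u)].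
Proof.
move=> H reg; have [A Dl Dr _ _] := H.
have m0l := mul0l H; have m0r := mul0r H; have mBl := mulBl H; have mBr := mulBr H.
elim=> [|a s [e [ee es eP]]].
  by exists 0; split => // P P0.
set b := a - m e a.
have [y hy] := reg b.
set f := m b y.
set g := e + f - m f e.
have eb : m e b = 0 by rewrite /b mBr A ee subrr.
have ef : m e f = 0 by rewrite /f A eb m0l.
have ff : m f f = f by rewrite /f A hy.
have fb : m f b = b by rewrite /f hy.
have ge : m g e = e.
  by rewrite /g mBl Dl ee -A ee addrK.
have gf : m g f = f by rewrite /g mBl Dl ef ff -A ef m0r add0r subr0.
have gb : m g b = b by rewrite -fb A gf.
have ga : m g a = a.
  have -> : a = m e a + b by rewrite /b addrC subrK.
  by rewrite Dr A ge gb.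
exists g; split.
- by rewrite {3}/g mBr Dr ge gf A gf.
- move=> h; rewrite in_cons => /orP [/eqP -> //|hs].
  by rewrite -(es h hs) A ge.
- move=> P P0 PD PM Ps.
  have Pe : P e by apply: eP => // h hs; apply: (Ps); rewrite in_cons hs orbT.
  have Pa : P a by apply: (Ps); rewrite in_cons eqxx.
  have Pb : P b by rewrite /b -(mulNr H); apply: (PD) => //; apply: (PM).
  have Pf : P f by apply: (PM).
  by rewrite /g -(mulNr H); apply: (PD); [apply: (PD)|apply: (PM)].
Qed.

Theorem lemma3p2 (K : fieldType) (R : lmodType K) (mulR : R -> R -> R)
  (J : R -> Prop) (Q : lmodType K) (mulQ : Q -> Q -> Q) (pi : R -> Q) :
  is_algebra_mul mulR -> vn_regular mulR -> is_ideal mulR J ->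
  is_quotient_map mulR J mulQ pi ->
  (forall A : Q -> Prop, is_subalgebra mulQ A -> fin_dim A ->
     exists T : R -> Prop,
       [/\ is_subalgebra mulR T, fin_dim T,
           (forall x y, T x -> T y -> pi x = pi y -> x = y)
         & (forall q, A q <-> exists t, T t /\ pi t = q)])
  /\
  (fin_dim (fun _ : Q => True) ->
     exists T : R -> Prop,
       [/\ is_subalgebra mulR T,
           (forall x, T x -> J x -> x = 0)
         & (forall r, exists t j, [/\ T t, J j & r = t + j])]).
Proof.
move=> HA reg [[J0 JD JZ] Jid] [piL piM piS piK].
have [As Dl Dr Zl Zr] := HA.
have m0l := mul0l HA; have m0r := mul0r HA; have mBl := mulBl HA; have mBr := mulBr HA.
have pi0 : pi 0 = 0 by apply/piK.
have piD : forall x y, pi (x + y) = pi x + pi y by move=> x y; rewrite -[x]scale1r piL !scale1r.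
have piZ : forall (a : K) x, pi (a *: x) = a *: pi x by move=> a x; rewrite -[_ *: x]addr0 piL pi0 addr0.
have piB : forall x y, pi (x - y) = pi x - pi y.
  by move=> x y; rewrite -scaleN1r addrC piL scaleN1r addrC.
have pisum : forall (I : Type) (r : seq I) (P : pred I) (F : I -> R),
    pi (\sum_(i <- r | P i) F i) = \sum_(i <- r | P i) pi (F i).
  by move=> I r P F; apply: (big_morph pi piD pi0).
have part1 : forall A : Q -> Prop, is_subalgebra mulQ A -> fin_dim A ->
     exists T : R -> Prop,
       [/\ is_subalgebra mulR T, fin_dim T,
           (forall x y, T x -> T y -> pi x = pi y -> x = y)
         & (forall q, A q <-> exists t, T t /\ pi t = q)].
  move=> A [[A0 AD AZ] AM] [n [v [Av Asp]]].
  have [m [b [Ab Bsp Bind]]] := basis_exists Av Asp.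
  have Asum : forall c : 'I_m -> K, A (\sum_i c i *: b i).
    move=> c; apply: big_ind; [exact: A0|move=> y z Ay Az; exact: AD|].
    by move=> i _; apply: AZ.
  have [x hx] := fin_all_exists (fun i : 'I_m => piS (b i)).
  have [C hC] := fin_all_exists
    (fun p : 'I_m * 'I_m => Bsp _ (AM _ _ (Ab p.1) (Ab p.2))).
  pose j i k := mulR (x i) (x k) - \sum_l C (i, k) l *: x l.
  have Jj : forall i k, J (j i k).
    move=> i k; apply/piK; rewrite /j piB piM !hx pisum.
    rewrite (hC (i, k)) /=; apply/eqP; rewrite subr_eq0; apply/eqP.
    by apply: eq_bigr => l _; rewrite piZ hx.
  pose gen (p : option 'I_m * 'I_m * 'I_m) :=
    match p with (None, i, k) => j i k | (Some l, i, k) => mulR (x l) (j i k) end.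
  pose s := [seq gen p | p <- enum {: option 'I_m * 'I_m * 'I_m}].
  have gin : forall p, gen p \in s by move=> p; exact: (map_f gen (mem_enum _ p)).
  have [u [uu us uP]] := local_unit HA reg s.
  have uJ : J u.
    apply: uP => //; first by move=> y z Jy; exact: (Jid z y Jy).2.
    move=> g /mapP [[[[l|] i] k] _ ->] /=; last exact: Jj.
    exact: (Jid _ _ (Jj i k)).1.
  have uj : forall i k, mulR u (j i k) = j i k by move=> i k; exact: (us _ (gin (None, i, k))).
  have uxj : forall l i k, mulR u (mulR (x l) (j i k)) = mulR (x l) (j i k).
    by move=> l i k; exact: (us _ (gin (Some l, i, k))).
  have uxu : forall i, mulR u (mulR (x i) u) = mulR (x i) u.
    apply: (uP (fun w => forall i, mulR u (mulR (x i) w) = mulR (x i) w)).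
    - by move=> i; rewrite !m0r.
    - by move=> y z Py Pz i; rewrite !Dr Py Pz.
    - by move=> y z Py i; rewrite [mulR (x i) _]As As Py.
    move=> g /mapP [[[[l|] i] k] _ ->] i' /=; last exact: uxj.
    have -> : mulR (x i') (mulR (x l) (j i k))
        = mulR (j i' l) (j i k) + \sum_q C (i', l) q *: mulR (x q) (j i k).
      rewrite As.
      have -> : \sum_q C (i', l) q *: mulR (x q) (j i k)
          = mulR (\sum_q C (i', l) q *: x q) (j i k).
        by rewrite (mul_suml HA); apply: eq_bigr => q _; rewrite Zl.
      by rewrite -Dl {1}/j subrK.
    rewrite Dr As uj (mul_sumr HA); congr (_ + _); apply: eq_bigr => q _.
    by rewrite Zr uxj.
  pose phi w := w - mulR u w.
  have phiD : forall y z, phi (y + z) = phi y + phi z.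
    by move=> y z; rewrite /phi Dr opprD addrACA.
  have phi0 : phi 0 = 0 by rewrite /phi m0r subr0.
  have phiZ : forall (a : K) y, phi (a *: y) = a *: phi y.
    by move=> a y; rewrite /phi Zr scalerBr.
  have phisum : forall (I : Type) (r : seq I) (P : pred I) (F : I -> R),
      phi (\sum_(i <- r | P i) F i) = \sum_(i <- r | P i) phi (F i).
    by move=> I r P F; apply: (big_morph phi phiD phi0).
  pose psi i := phi (x i).
  have phij : forall i k, phi (j i k) = 0 by move=> i k; rewrite /phi uj subrr.
  have psiM : forall i k, mulR (psi i) (psi k) = \sum_l C (i, k) l *: psi l.
    move=> i k.
    have -> : mulR (psi i) (psi k) = phi (mulR (x i) (x k)).
      have phil : forall a y, mulR (phi a) y = phi (mulR a y).
        by move=> a y; rewrite /phi mBl As.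
      have phiB : forall y z, phi (y - z) = phi y - phi z.
        by move=> y z; rewrite /phi mBr !opprD !opprK addrACA.
      rewrite /psi phil [phi (x k)]/phi mBr As phiB.
      have -> : phi (mulR (mulR (x i) u) (x k)) = 0.
        by rewrite /phi As uxu subrr.
      by rewrite subr0.
    have -> : mulR (x i) (x k) = j i k + \sum_l C (i, k) l *: x l by rewrite /j subrK.
    by rewrite phiD phij add0r phisum; apply: eq_bigr => l _; rewrite phiZ.
  pose T t := exists c : 'I_m -> K, t = \sum_i c i *: psi i.
  have T0 : T 0 by exists (fun _ => 0); rewrite big1 // => i _; rewrite scale0r.
  have TD : forall y z, T y -> T z -> T (y + z).
    move=> y z [c ->] [d ->]; exists (fun i => c i + d i).
    by rewrite -big_split; apply: eq_bigr => i _; rewrite scalerDl.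
  have TZ : forall (a : K) y, T y -> T (a *: y).
    move=> a y [c ->]; exists (fun i => a * c i).
    by rewrite scaler_sumr; apply: eq_bigr => i _; rewrite scalerA.
  have Tpsi : forall i, T (psi i).
    move=> i; exists (fun k => (k == i)%:R).
    rewrite (bigD1 i) //= eqxx scale1r big1 ?addr0 // => k /negbTE ->.
    by rewrite scale0r.
  have Tsum : forall (I : Type) (r : seq I) (F : I -> R),
      (forall i, T (F i)) -> T (\sum_(i <- r) F i).
    by move=> I r F TF; apply: big_ind => //; move=> i _; apply: TF.
  have TM : forall y z, T y -> T z -> T (mulR y z).
    move=> y z [c ->] [d ->]; rewrite (mul_suml HA); apply: (Tsum) => i.
    rewrite Zl (mul_sumr HA); apply: (TZ); apply: (Tsum) => k.
    by rewrite Zr psiM; apply: (TZ); exists (C (i, k)).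
  have pipsi : forall i, pi (psi i) = b i.
    by move=> i; rewrite /psi /phi piB hx (proj2 (piK _) (Jid (x i) u uJ).2) subr0.
  have piT : forall c : 'I_m -> K, pi (\sum_i c i *: psi i) = \sum_i c i *: b i.
    by move=> c; rewrite pisum; apply: eq_bigr => i _; rewrite piZ pipsi.
  exists T; split.
  - by split; [split|].
  - by exists m, psi; split => // y [c ->]; exists c.
  - move=> y z [c ->] [d ->]; rewrite !piT => /eqP; rewrite -subr_eq0 -sumrB.
    under eq_bigr do rewrite -scalerBl.
    move=> /eqP /Bind cd; apply: eq_bigr => i _.
    by have /eqP := cd i; rewrite subr_eq0 => /eqP ->.
  - move=> q; split.
      by move=> /Bsp [c ->]; exists (\sum_i c i *: psi i); split; [exists c|rewrite piT].
    by move=> [t [[c ->] <-]]; rewrite piT.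
split; first exact: part1.
move=> fd.
have HT : is_subalgebra mulQ (fun _ : Q => True) by split; [split|].
have [T [TS _ Tinj TA]] := part1 _ HT fd.
have [[T0 _ _] _] := TS.
exists T; split => //.
- by move=> y Ty Jy; apply: Tinj => //; rewrite pi0; apply/piK.
- move=> r; have [t [Tt pt]] := (TA (pi r)).1 I.
  exists t, (r - t); split => //; last by rewrite addrC subrK.
  by apply/piK; rewrite piB pt subrr.
Qed.
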